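(* Let $G$ be a finite group and $N$ a proper normal subgroup of $G$. Then: (1) $\eta(G/N) \le \eta(G)$. (2) $\eta(G/N) = \eta(G)$ if and only if all of the following hold: (a) $N \subseteq G^-$; (b) $(G/N)^- = \{ gN \in G/N : gN \subseteq G^-\}$ (here $gN$ is viewed as a subset of $G$); (c) for every $x \in G \setminus G^-$, every element of $xN \setminus G^-$ is conjugate in $G$ to a generator of $\langle x \rangle$. (3) If $G$ is a $p$-group and $\eta(G/N) = \eta(G)$, then $G^-$ is a union of cosets of $N$. (4) $\eta(G/N) = \eta(G)$ and $G^-$ is a union of cosets of $N$ if and only if for every $x \in G \setminus G^-$, every element of $xN$ is conjugate in $G$ to a generator of $\langle x \rangle$. (5) If $\eta(G/N) = \eta(G)$ and $G^-$ is a union of cosets of $N$, then (a) $G^- N = G^-$ and (b) $(G/N)^- = G^-N/N$.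
   Context: A cyclic subgroup $C$ of a group $G$ is maximal cyclic if there is no cyclic subgroup $D$ of $G$ with $C < D$. $\eta(G)$ denotes the number of conjugacy classes of maximal cyclic subgroups of $G$. For a group $G$, $G^- = \{ g \in G : \langle g \rangle \text{ is not maximal cyclic in } G\}$; similarly $(G/N)^-$ is the set of elements of $G/N$ generating a cyclic subgroup that is not maximal cyclic in $G/N$. For subsets $S,T \subseteq G$, $ST = \{st : s \in S, t \in T\}$, and $SN/N = \{ sN : s \in S\} \subseteq G/N$. *)

(* Defs.v *)
From HB Require Import structures.
From mathcomp Require Import all_boot all_fingroup all_solvable.
Set Implicit Arguments. Unset Strict Implicit. Unset Printing Implicit Defensive.

Section Defs.
Variable gT : finGroupType.
Implicit Types (G N C : {set gT}).
Open Scope group_scope.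

Definition maxcyclic G C : bool := [max C of H | (H \subset G) && cyclic H].

Definition maxcycs G : {set {set gT}} := [set C | maxcyclic G C].

Definition eta_mc G : nat := #|[set C :^: G | C in maxcycs G]|.

Definition Gminus G : {set gT} := [set g in G | ~~ maxcyclic G <[g]>].

Definition union_of_cosets (A N : {set gT}) : Prop :=
  exists X : {set gT}, A = \bigcup_(x in X) (x *: N).
End Defs.

(* Main.v *)
Require Import Defs.
From HB Require Import structures.
From mathcomp Require Import all_boot all_fingroup all_solvable.
Set Implicit Arguments. Unset Strict Implicit. Unset Printing Implicit Defensive.
Open Scope nat_scope.

Lemma nt_lift m n k : 0 < k -> 0 < n -> coprime m k ->
  coprime n (k + m * n`_(\pi(k)^')).
Proof.
move=> k0 n0 cmk; set t := n`_(\pi(k)^'); set k' := k + m * t.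
have tpi : forall p, prime p -> p %| t -> p \in \pi(k)^'.
  move=> p pp pt; rewrite -(pnatE _ pp); exact: pnat_dvd pt (part_pnat _ _).
apply/negPn/negP => ng.
have g0 : 0 < gcdn n k' by rewrite gcdn_gt0 n0.
have g1 : 1 < gcdn n k' by rewrite ltn_neqAle eq_sym ng g0.
have pp := pdiv_prime g1; set p := pdiv _ in pp.
have pg : p %| gcdn n k' by apply: pdiv_dvd.
have pn : p %| n by apply: dvdn_trans pg (dvdn_gcdl _ _).
have pk' : p %| k' by apply: dvdn_trans pg (dvdn_gcdr _ _).
have [pk | npk] := boolP (p %| k).
  have npm : ~~ (p %| m).
    apply/negP => pm; have: p %| gcdn m k by rewrite dvdn_gcd pm pk.
    by rewrite (eqP cmk) dvdn1 => /eqP p1; rewrite p1 in pp.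
  have npt : ~~ (p %| t).
    apply/negP => /(tpi _ pp); rewrite !inE /= mem_primes pp k0 pk //.
  move: pk'; rewrite /k' dvdn_addr // Euclid_dvdM //.
  by rewrite (negPf npm) (negPf npt).
have pt : p %| t.
  have : p %| t * n`_(\pi(k)^'^') by rewrite /t partnC.
  rewrite Euclid_dvdM // => /orP [//| /(fun H => pnat_dvd H (part_pnat _ _))].
  by rewrite (pnatE _ pp) !inE /= mem_primes pp k0 (negPf npk).
move: pk'; rewrite /k' dvdn_addl ?(negPf npk) //.
by apply: dvdn_mull.
Qed.
Open Scope group_scope.

Lemma lift_gen (gT : finGroupType) (N : {group gT}) h u : h \in 'N(N) ->
  generator <[coset N h]> u -> exists2 z, generator <[h]> z & coset N z = u.
Proof.
move=> Nh gu; have := cycle_generator gu; case/cycleP => k def_u; subst u.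
move: gu; rewrite generator_coprime => co.
have [k0 | kpos] := posnP k.
  subst k; move: co; rewrite /coprime gcdn0 order_eq1 => /eqP e.
  by exists h; [apply: generator_cycle | rewrite expg0].
set m := #[coset N h] in co *; set n := #[h].
exists (h ^+ (k + m * (n`_(\pi(k)^'))%N)).
  by rewrite generator_coprime nt_lift ?order_gt0.
by rewrite morphX //= expgD expgM expg_order expg1n mulg1.
Qed.

Lemma mc_cycle (gT : finGroupType) (G : {group gT}) (C : {set gT}) :
  maxcyclic G C -> exists2 x, x \in G & C = <[x]>.
Proof.
move=> /maxsetp /andP [gC]; rewrite /= (gen_set_id gC) => /andP [sCG cC].
case/cyclicP: cC => x defC; exists x => //.
by rewrite -cycle_subG -defC.
Qed.

Lemma mcP (gT : finGroupType) (G : {group gT}) x : x \in G ->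
  reflect (forall y, y \in G -> <[x]> \subset <[y]> -> <[y]> \subset <[x]>)
          (maxcyclic G <[x]>).
Proof.
move=> Gx; apply: (iffP maxgroupP) => [[_ H] y Gy sxy | H].
  by rewrite (H <[y]>%G) // cycle_subG Gy cycle_cyclic.
split; first by rewrite cycle_subG Gx cycle_cyclic.
move=> K /andP [sKG /cyclicP [y defK]] sxK; apply/eqP; rewrite eqEsubset sxK andbT.
by rewrite defK H // -?defK // -cycle_subG -defK.
Qed.

Lemma mc_exists (gT : finGroupType) (G : {group gT}) x : x \in G ->
  exists2 h, maxcyclic G <[h]> & x \in <[h]>.
Proof.
move=> Gx.
have P: (fun H : {group gT} => (H \subset G) && cyclic H) <[x]>%G.
  by rewrite /= cycle_subG Gx cycle_cyclic.
case: (@maxgroup_exists _ (fun H : {group gT} => (H \subset G) && cyclic H) _ P) => K mK sxK.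
have [h Gh defK] := mc_cycle mK.
by exists h; rewrite -defK // -cycle_subG.
Qed.

Lemma mc_sub (gT : finGroupType) (G : {group gT}) x :
  maxcyclic G <[x]> -> x \in G.
Proof.
move=> /mc_cycle [y Gy e]; have: x \in <[y]> by rewrite -e cycle_id.
by apply: subsetP; rewrite cycle_subG.
Qed.

Lemma mcJ (gT : finGroupType) (G : {group gT}) (C : {set gT}) g : g \in G ->
  maxcyclic G (C :^ g) = maxcyclic G C.
Proof.
move=> Gg.
suff H: forall C g, g \in G -> maxcyclic G C -> maxcyclic G (C :^ g).
  apply/idP/idP; last exact: H.
  by move/(H _ g^-1); rewrite groupV -conjsgM mulgV conjsg1; apply.
move=> {}C {}g {}Gg mC; have [x Gx defC] := mc_cycle mC; subst C.
rewrite -cycleJ; apply/mcP; first by rewrite groupJ.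
move=> y Gy; rewrite cycleJ -(conjSg _ _ g^-1) -conjsgM mulgV conjsg1 => sxy.
have := (mcP Gx mC (y ^ g^-1) (groupJ Gy (groupVr Gg))).
rewrite cycleJ sxy => /(_ isT).
by rewrite -(conjSg _ _ g) -conjsgM mulVg conjsg1.
Qed.

Lemma mc_lift (gT : finGroupType) (G N : {group gT}) u : N <| G ->
  u \in G / N -> maxcyclic (G / N) <[u]> ->
  exists2 h, maxcyclic G <[h]> & coset N h = u.
Proof.
move=> nN /morphimP [g Ng Gg ->] mu.
have nGN : G \subset 'N(N) := normal_norm nN.
have [h mh gh] := mc_exists Gg; have Gh := mc_sub mh.
have Nh : h \in 'N(N) := subsetP nGN h Gh.
have sub : <[coset N g]> \subset <[coset N h]>.
  by rewrite cycle_subG; have := mem_quotient N gh; rewrite quotient_cycle.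
have := mcP (mem_quotient N Gg) mu (coset N h) (mem_quotient N Gh) sub => sub'.
have gen : generator <[coset N h]> (coset N g).
  by rewrite /generator eqEsubset sub sub'.
have [z gz ez] := lift_gen Nh gen.
by exists z => //; rewrite -(eqP gz).
Qed.

Lemma class_eq (gT : finGroupType) (G : {group gT}) (A B : {set gT}) :
  B \in A :^: G -> B :^: G = A :^: G.
Proof. by case/imsetP => g Gg ->; rewrite conjugates_conj lcoset_id. Qed.

Lemma class_refl (gT : finGroupType) (G : {group gT}) (A : {set gT}) :
  A \in A :^: G.
Proof. by apply/imsetP; exists 1; rewrite ?group1 ?conjsg1. Qed.

Lemma F_class (gT : finGroupType) (G N : {group gT}) (C : {set gT}) :
  N <| G -> C \subset G ->
  [set D / N | D in C :^: G] = (C / N) :^: (G / N).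
Proof.
move=> nN sCG; have nGN : G \subset 'N(N) := normal_norm nN.
apply/setP => D; apply/imsetP/imsetP.
  case=> E /imsetP [g Gg ->] ->; exists (coset N g); first exact: mem_quotient.
  by rewrite quotientJ // (subsetP nGN).
case=> u /morphimP [g Ng Gg ->] ->; exists (C :^ g); first exact: imset_f.
by rewrite quotientJ.
Qed.

Lemma mc_subG (gT : finGroupType) (G : {group gT}) C : maxcyclic G C -> C \subset G.
Proof. by case/mc_cycle => x Gx ->; rewrite cycle_subG. Qed.

Lemma CLq_eq (gT : finGroupType) (G N : {group gT}) : N <| G ->
  [set D :^: (G / N) | D in maxcycs (G / N)] =
  [set [set E / N | E in K] | K : {set {set gT}} in
     [set C :^: G | C in [set C in maxcycs G | maxcyclic (G / N) (C / N)]]].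
Proof.
move=> nN; have nGN : G \subset 'N(N) := normal_norm nN.
apply/setP => Y; apply/imsetP/imsetP.
  case=> D; rewrite inE => mD ->.
  have [u Qu eD] := mc_cycle mD; subst D.
  have [h mh eh] := mc_lift nN Qu mD.
  have Nh : h \in 'N(N) := subsetP nGN h (mc_sub mh).
  exists (<[h]> :^: G).
    by apply/imsetP; exists <[h]>; rewrite // !inE mh /= quotient_cycle // eh.
  by rewrite F_class ?cycle_subG ?(mc_sub mh) // quotient_cycle // eh.
case=> K /imsetP [C]; rewrite !inE => /andP [mC mCq] -> ->.
by exists (C / N); rewrite ?inE // F_class // mc_subG.
Qed.

Lemma eta_le (gT : finGroupType) (G N : {group gT}) : N <| G ->
  eta_mc (G / N) <= eta_mc G.
Proof.
move=> nN; rewrite /eta_mc CLq_eq //.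
apply: leq_trans (leq_imset_card _ _) _.
apply: subset_leq_card; apply: imsetS.
by apply/subsetP => C; rewrite inE => /andP [].
Qed.

Lemma eta_eqP (gT : finGroupType) (G N : {group gT}) : N <| G ->
  eta_mc (G / N) = eta_mc G <->
  (forall x, maxcyclic G <[x]> -> maxcyclic (G / N) <[coset N x]>) /\
  (forall x y, maxcyclic G <[x]> -> maxcyclic G <[y]> ->
     <[coset N y]> \in <[coset N x]> :^: (G / N) -> <[y]> \in <[x]> :^: G).
Proof.
move=> nN; have nGN : G \subset 'N(N) := normal_norm nN.
have Nx : forall x, maxcyclic G <[x]> -> x \in 'N(N).
  by move=> x mx; apply: (subsetP nGN); apply: mc_sub mx.
have Fx : forall x, maxcyclic G <[x]> ->
    [set E / N | E in <[x]> :^: G] = <[coset N x]> :^: (G / N).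
  by move=> x mx; rewrite F_class ?mc_subG // quotient_cycle ?Nx.
rewrite /eta_mc CLq_eq //.
set S' := [set C in maxcycs G | _].
set F := fun K : {set {set gT}} => [set E / N | E in K].
have sS'S : S' \subset maxcycs G by apply/subsetP => C; rewrite inE => /andP [].
split => [eq | [E1 E2]].
  have le1 := leq_imset_card F [set C :^: G | C in S'].
  have le2 := subset_leq_card (imsetS (fun C => C :^: G) sS'S).
  have e1 : #|F @: [set C :^: G | C in S']| = #|[set C :^: G | C in S']|.
    by apply/eqP; rewrite eqn_leq le1 /= eq le2.
  have e2 : [set C :^: G | C in S'] = [set C :^: G | C in maxcycs G].
    by apply/eqP; rewrite eqEcard imsetS //= -eq e1.
  have inj : {in [set C :^: G | C in S'] &, injective F} by apply/imset_injP; rewrite e1.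
  have KS : forall x, maxcyclic G <[x]> -> <[x]> :^: G \in [set C :^: G | C in S'].
    by move=> x mx; rewrite e2; apply: imset_f; rewrite inE.
  split.
    move=> x mx; have := KS x mx; case/imsetP => C; rewrite !inE => /andP [mC mCq] eC.
    have : <[x]> \in C :^: G by rewrite -eC class_refl.
    case/imsetP => g Gg ex.
    by rewrite -quotient_cycle ?Nx // ex quotientJ ?(subsetP nGN) // mcJ // mem_quotient.
  move=> x y mx my hyx.
  have eqF : F (<[x]> :^: G) = F (<[y]> :^: G) by rewrite /F /= Fx // Fx // (class_eq hyx).
  by rewrite (inj _ _ (KS x mx) (KS y my) eqF) class_refl.
have e2 : S' = maxcycs G.
  apply/setP => C; rewrite !inE; case mC: (maxcyclic G C) => //=.
  have [x Gx eC] := mc_cycle mC; rewrite eC in mC *.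
  by rewrite (quotient_cycle (subsetP nGN x Gx)) (E1 x mC).
rewrite e2 card_in_imset //.
move=> K1 K2 /imsetP [C1 mC1 ->] /imsetP [C2 mC2 ->]; rewrite inE in mC1; rewrite inE in mC2.
have [x Gx eC1] := mc_cycle mC1; have [y Gy eC2] := mc_cycle mC2; subst C1 C2.
rewrite /F /= Fx // Fx // => eF.
have : <[coset N y]> \in <[coset N x]> :^: (G / N) by rewrite eF class_refl.
by move/(E2 _ _ mC1 mC2)/class_eq.
Qed.

Lemma coset_mem (gT : finGroupType) (G N : {group gT}) x y : N <| G -> x \in G ->
  (y \in x *: N) = (y \in G) && (coset N y == coset N x).
Proof.
move=> nN Gx; have nGN : G \subset 'N(N) := normal_norm nN.
have sNG : N \subset G := normal_sub nN.
have Nx := subsetP nGN x Gx.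
rewrite -norm_rlcoset //.
apply/idP/andP => [yNx | [Gy /eqP e]].
  have Gy : y \in G.
    by move: yNx; rewrite mem_rcoset => /(subsetP sNG) => h; rewrite -(groupMr _ (groupVr Gx)).
  by split=> //; apply/eqP/rcoset_kercosetP => //; apply: subsetP nGN y Gy.
by apply/rcoset_kercosetP => //; apply: subsetP nGN y Gy.
Qed.

Lemma mcq1 (gT : finGroupType) (G N : {group gT}) : N <| G -> N \proper G ->
  ~~ maxcyclic (G / N) <[1]>.
Proof.
move=> nN pNG; apply/negP => m1.
have : G / N \subset [1].
  apply/subsetP => u Qu; have := mcP (group1 _) m1 u Qu.
  by rewrite cycle1 sub1G => /(_ isT); rewrite cycle_subG.
rewrite quotient_sub1 ?normal_norm //.
by move: pNG; rewrite properE => /andP [_ /negP].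
Qed.

Lemma union_closed (gT : finGroupType) (N : {group gT}) (A : {set gT}) :
  union_of_cosets A N <-> (forall x y, x \in A -> y \in x *: N -> y \in A).
Proof.
split.
  case=> X eX x y; rewrite eX => /bigcupP [w wX xw] yx.
  apply/bigcupP; exists w => //.
  by rewrite -(lcoset_eqP xw).
move=> cl; exists A; apply/setP => y; apply/idP/bigcupP.
  by move=> yA; exists y => //; apply: lcoset_refl.
by case=> x xA yx; apply: cl yx.
Qed.

Lemma inGm (gT : finGroupType) (G : {group gT}) y :
  (y \in Gminus G) = (y \in G) && ~~ maxcyclic G <[y]>.
Proof. by rewrite inE. Qed.

Lemma b_iff_E1 (gT : finGroupType) (G N : {group gT}) : N <| G ->
  (forall x, maxcyclic G <[x]> -> maxcyclic (G / N) <[coset N x]>) <->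
  Gminus (G / N) = [set Ng in G / N | (Ng : {set gT}) \subset Gminus G].
Proof.
move=> nN; have nGN : G \subset 'N(N) := normal_norm nN.
split => [E1 | b].
  apply/setP => u; rewrite !inE; case Qu: (u \in G / N) => //=.
  move: (Qu) => /morphimP [g Ng Gg eu].
  apply/idP/idP => [nm | sub].
    apply/subsetP => y; rewrite eu val_coset // => yNg.
    have yx : y \in g *: N by rewrite -norm_rlcoset.
    move: yx; rewrite (coset_mem _ nN) // => /andP [Gy /eqP ey].
    rewrite inE Gy /=; apply/negP => my.
    by have := E1 y my; rewrite ey -eu => m; rewrite m in nm.
  apply/negP => mu; have [h mh eh] := mc_lift nN Qu mu.
  have : h \in Gminus G.
    apply: (subsetP sub); rewrite -eh val_coset ?rcoset_refl //.
    exact: subsetP nGN h (mc_sub mh).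
  by rewrite inE mh andbF.
move=> x mx; apply/negPn/negP => nmq.
have Gx := mc_sub mx.
have : coset N x \in Gminus (G / N) by rewrite inE mem_quotient // nmq.
rewrite b inE => /andP [_ sub].
have : x \in Gminus G.
  by apply: (subsetP sub); rewrite val_coset ?rcoset_refl // (subsetP nGN).
by rewrite inE mx andbF.
Qed.

Lemma c_iff_E2 (gT : finGroupType) (G N : {group gT}) : N <| G ->
  (forall x y, maxcyclic G <[x]> -> maxcyclic G <[y]> ->
     <[coset N y]> \in <[coset N x]> :^: (G / N) -> <[y]> \in <[x]> :^: G) <->
  (forall x, x \in G :\: Gminus G ->
              forall y, y \in (x *: N) :\: Gminus G ->
                exists2 z, generator <[x]> z & y \in z ^: G).
Proof.
move=> nN; have nGN : G \subset 'N(N) := normal_norm nN.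
have mcE : forall x, x \in G :\: Gminus G -> maxcyclic G <[x]>.
  by move=> x; rewrite !inE => /andP [/negP h Gx]; rewrite Gx in h; apply/negPn/negP.
split => [E2 | c].
  move=> x xG y; rewrite inE => /andP [yGm yx].
  have Gx : x \in G by move: xG; rewrite inE => /andP [].
  move: (yx); rewrite (coset_mem _ nN) // => /andP [Gy /eqP ey].
  have mx := mcE x xG.
  have my : maxcyclic G <[y]> by apply: mcE; rewrite inE yGm Gy.
  have := E2 x y mx my; rewrite ey class_refl => /(_ isT) /imsetP [g Gg eyx].
  exists (y ^ g^-1).
    by rewrite /generator cycleJ eyx -conjsgM mulgV conjsg1.
  by apply/imsetP; exists g => //; rewrite conjgKV.
move=> x y mx my /imsetP [u /morphimP [g Ng Gg ->] eyx].
have Gx := mc_sub mx; have Gy := mc_sub my.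
have Nx := subsetP nGN x Gx.
rewrite -cycleJ -morphJ //= in eyx.
have mx' : maxcyclic G <[x ^ g]> by rewrite cycleJ mcJ.
have gen : generator <[coset N (x ^ g)]> (coset N y) by rewrite /generator eyx.
have [z gz ez] := lift_gen (subsetP nGN _ (groupJ Gx Gg)) gen.
have ezx : <[z]> = <[x ^ g]> by rewrite (eqP gz).
have mz : maxcyclic G <[z]> by rewrite ezx.
have Gz := mc_sub mz.
have zG : z \in G :\: Gminus G by rewrite !inE Gz mz.
have yz : y \in (z *: N) :\: Gminus G.
  by rewrite !inE my andbF /= (coset_mem _ nN) // Gy ez eqxx.
have [w gw /imsetP [g' Gg' ->]] := c z zG y yz.
apply/imsetP; exists (g * g'); first by rewrite groupM.
by rewrite cycleJ -(eqP gw) ezx cycleJ conjsgM.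
Qed.

Lemma a_of_E1 (gT : finGroupType) (G N : {group gT}) : N <| G -> N \proper G ->
  (forall x, maxcyclic G <[x]> -> maxcyclic (G / N) <[coset N x]>) ->
  N \subset Gminus G.
Proof.
move=> nN pNG E1; apply/subsetP => n Nn.
rewrite inE (subsetP (normal_sub nN)) //=; apply/negP => mn.
by have := E1 n mn; rewrite coset_id // => m; move: (mcq1 nN pNG); rewrite m.
Qed.

Lemma E1_of_closed (gT : finGroupType) (G N : {group gT}) : N <| G ->
  (forall x y, x \in Gminus G -> y \in x *: N -> y \in Gminus G) ->
  (forall x, maxcyclic G <[x]> -> maxcyclic (G / N) <[coset N x]>).
Proof.
move=> nN cl x mx; have nGN : G \subset 'N(N) := normal_norm nN.
have Gx := mc_sub mx; have Nx := subsetP nGN x Gx.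
apply/mcP; first exact: mem_quotient.
move=> v /morphimP [k Nk Gk ->] sxv.
have [h mh kh] := mc_exists Gk; have Gh := mc_sub mh.
have Nh := subsetP nGN h Gh.
have : coset N x \in <[coset N h]>.
  rewrite -(quotient_cycle Nh); apply: (subsetP (quotientS N (_ : <[k]> \subset <[h]>))).
    by rewrite cycle_subG.
  by rewrite (quotient_cycle Nk) -cycle_subG.
case/cycleP => j; rewrite -morphX //= => exj.
have Ghj : h ^+ j \in G by rewrite groupX.
have xhj : x \in (h ^+ j) *: N.
  by rewrite (coset_mem _ nN) // Gx /=; apply/eqP; rewrite exj ?morphX //.
have mhj : maxcyclic G <[h ^+ j]>.
  apply/negPn/negP => nm.
  have : x \in Gminus G by apply: (cl _ _ _ xhj); rewrite inE Ghj nm.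
  by rewrite inE mx andbF.
have ehj : <[h]> \subset <[h ^+ j]> by apply: (mcP Ghj mhj h Gh (cycleX _ _)).
have e2 : <[coset N x]> = <[h ^+ j]> / N.
  by rewrite quotient_cycle ?(subsetP nGN _ Ghj) // exj ?morphX.
rewrite e2 -(quotient_cycle Nk).
by apply: quotientS; apply: subset_trans ehj; rewrite cycle_subG.
Qed.

Lemma closed_pgroup (gT : finGroupType) (G N : {group gT}) p : N <| G -> N \proper G ->
  prime p -> p.-group G ->
  (forall x, maxcyclic G <[x]> -> maxcyclic (G / N) <[coset N x]>) ->
  (forall x y, x \in Gminus G -> y \in x *: N -> y \in Gminus G).
Proof.
move=> nN pNG pp pG E1 x y; have nGN : G \subset 'N(N) := normal_norm nN.
rewrite inE => /andP [Gx nmx] yx.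
move: (yx); rewrite (coset_mem _ nN) // => /andP [Gy /eqP ey].
rewrite inE Gy /=; apply/negP => my.
have mq := E1 y my; rewrite ey in mq.
have [h mh xh] := mc_exists Gx; have Gh := mc_sub mh.
have Nh := subsetP nGN h Gh; have Nx := subsetP nGN x Gx.
move: (xh) => /cycleP [j exj].
have sub : <[coset N x]> \subset <[coset N h]>.
  by rewrite cycle_subG; have := mem_quotient N xh; rewrite quotient_cycle.
have sub' := mcP (mem_quotient N Gx) mq (coset N h) (mem_quotient N Gh) sub.
have gen : generator <[coset N h]> (coset N h ^+ j).
  by rewrite -morphX //= -exj /generator eqEsubset sub sub'.
rewrite generator_coprime in gen.
have oq1 : 1 < #[coset N h].
  rewrite ltnNge; apply/negP => le1.
  have : coset N h = 1 by apply/eqP; rewrite -order_eq1 eqn_leq le1 order_gt0.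
  move=> e; move: mq; rewrite (eqP (_ : <[coset N x]> == <[1]>)).
    by move=> m; move: (mcq1 nN pNG); rewrite m.
  rewrite eqEsubset; apply/andP; split; last by rewrite cycle_subG group1.
  by rewrite -e.
have peh : p.-nat #[h] := mem_p_elt pG Gh.
have pq : p %| #[coset N h].
  have pq' : p.-nat #[coset N h] := pnat_dvd (morph_order _ Nh) peh.
  have qp := pdiv_prime oq1.
  have : pdiv #[coset N h] \in \pi(#[coset N h]) by rewrite mem_primes qp order_gt0 pdiv_dvd.
  by move/(pnatPpi pq'); rewrite inE => /eqP <-; apply: pdiv_dvd.
have cpj : coprime p j by apply: coprime_dvdl pq gen.
have [k ek] := p_natP peh.
have cj : coprime #[h] j.
  by rewrite ek; case: k {ek} => [|k]; rewrite ?coprime1n // coprime_pexpl.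
have : maxcyclic G <[x]>.
  by rewrite exj -(eqP (_ : generator <[h]> (h ^+ j))) // generator_coprime.
by rewrite (negPf nmx).
Qed.

Unset Implicit Arguments.

Theorem theorem4p1 (gT : finGroupType) (G N : {group gT}) :
  N <| G -> N \proper G ->
  [/\ (* (1) *)
      eta_mc (G / N) <= eta_mc G,
      (* (2) *)
      eta_mc (G / N) = eta_mc G <->
        [/\ N \subset Gminus G,
            Gminus (G / N) = [set Ng in G / N | (Ng : {set gT}) \subset Gminus G]
          & forall x, x \in G :\: Gminus G ->
              forall y, y \in (x *: N) :\: Gminus G ->
                exists2 z, generator <[x]> z & y \in z ^: G],
      (* (3) *)
      forall p, prime p -> p.-group G -> eta_mc (G / N) = eta_mc G ->
        union_of_cosets (Gminus G) N,
      (* (4) *)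
      (eta_mc (G / N) = eta_mc G /\ union_of_cosets (Gminus G) N) <->
        (forall x, x \in G :\: Gminus G ->
           forall y, y \in x *: N ->
             exists2 z, generator <[x]> z & y \in z ^: G)
    & (* (5) *)
      eta_mc (G / N) = eta_mc G -> union_of_cosets (Gminus G) N ->
        Gminus G * N = Gminus G /\ Gminus (G / N) = coset N @: Gminus G].
Proof.
move=> nN pNG; have nGN : G \subset 'N(N) := normal_norm nN.
have sNG : N \subset G := normal_sub nN.
have two : eta_mc (G / N) = eta_mc G <->
        [/\ N \subset Gminus G,
            Gminus (G / N) = [set Ng in G / N | (Ng : {set gT}) \subset Gminus G]
          & forall x, x \in G :\: Gminus G ->
              forall y, y \in (x *: N) :\: Gminus G ->
                exists2 z, generator <[x]> z & y \in z ^: G].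
  split.
    move/(eta_eqP nN) => [E1 E2]; split.
    - exact: a_of_E1 nN pNG E1.
    - exact/(b_iff_E1 nN).
    - exact/(c_iff_E2 nN).
  case=> _ b c; apply/(eta_eqP nN); split.
    exact/(b_iff_E1 nN).
  exact/(c_iff_E2 nN).
split.
- exact: eta_le.
- exact: two.
- move=> p pp pG /(eta_eqP nN) [E1 _]; apply/union_closed.
  exact: closed_pgroup nN pNG pp pG E1.
- split.
    case=> /two [_ _ c] /union_closed cl x xG y yx.
    apply: c => //; rewrite inE yx andbT; apply/negP => yGm.
    move: xG; rewrite inE => /andP [/negP []].
    by apply: (cl _ _ yGm); rewrite lcoset_sym.
  move=> H.
  have cl' : forall x y, x \in G :\: Gminus G -> y \in x *: N -> y \notin Gminus G.
    move=> x y xG yx; have [z gz /imsetP [g Gg ->]] := H x xG y yx.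
    have Gx : x \in G by move: xG; rewrite inE => /andP [].
    have mx : maxcyclic G <[x]>.
      by move: xG; rewrite !inE Gx andbT => /negPn.
    rewrite inE negb_and negbK cycleJ -(eqP gz) mcJ // mx orbT //.
  have cl : forall x y, x \in Gminus G -> y \in x *: N -> y \in Gminus G.
    move=> x y xGm yx; apply/negPn/negP => nyGm.
    have Gx : x \in G by move: xGm; rewrite inE => /andP [].
    have Gy : y \in G by move: yx; rewrite (coset_mem _ nN) // => /andP [].
    have yG : y \in G :\: Gminus G by rewrite inE nyGm Gy.
    by have := cl' y x yG; rewrite lcoset_sym yx xGm => /(_ isT).
  split; last exact/union_closed.
  apply/(eta_eqP nN); split; first exact: E1_of_closed nN cl.
  apply/(c_iff_E2 nN) => x xG y; rewrite inE => /andP [_ yx]; exact: H.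
move=> /(eta_eqP nN) [E1 _] /union_closed cl.
have b := (proj1 (b_iff_E1 nN) E1).
split.
  apply/setP => y; apply/idP/idP.
    case/mulsgP => a n aGm nNn ->; apply: (cl a) => //.
    by rewrite mem_lcoset mulKg.
  by move=> yGm; rewrite -(mulg1 y) mem_mulg.
rewrite b; apply/setP => u; rewrite inE; apply/andP/imsetP.
  case=> /morphimP [g Ng Gg ->] sub; exists g => //.
  by apply: (subsetP sub); rewrite val_coset ?rcoset_refl.
case=> g gGm ->.
have Gg : g \in G by move: gGm; rewrite inE => /andP [].
split; first exact: mem_quotient.
apply/subsetP => y; rewrite val_coset ?(subsetP nGN) // norm_rlcoset ?(subsetP nGN) //.
exact: cl.
Qed.
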